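(* Let $\mathcal{I}=\{(i\mid A_i): i\in[m]\}$ be an index coding instance. Then $\beta(\mathcal{I})\le\beta_{\text{FP-UMCD}}(\mathcal{I})$, where $$\beta_{\text{FP-UMCD}}(\mathcal{I})=\min\sum_{j\in[n]}\gamma_j\,\beta_{\text{UMCD}}(M_j),$$ the minimum being over all finite families of (possibly overlapping) subsets $M_1,\dots,M_n\subseteq[m]$ and weights $\gamma_j\in[0,1]$ such that $\sum_{j:\, i\in M_j}\gamma_j\ge1$ for every $i\in[m]$.
   Context: Index coding: messages $x_i\in\mathbb{F}_q^t$, $i\in[m]$; receiver $i$ wants $x_i$ and knows $\{x_j:j\in A_i\}$, $A_i\subseteq[m]\setminus\{i\}$. A $(t,r)$ index code is an encoder $\phi:\mathbb{F}_q^{mt}\to\mathbb{F}_q^r$ with decoders $\psi_i$ such that $\psi_i(\phi(x),(x_j)_{j\in A_i})=x_i$ for all messages and receivers; $\beta(\mathcal{I})$ is the infimum of $r/t$ over all $t$ and all $(t,r)$ index codes (over finite fields). The subinstance $M\subseteq[m]$ has receivers $M$ and side information $A_i\cap M$; $B_i$ is the complement of $A_i\cup\{i\}$ within the receiver set. For a $0/1$ matrix $\boldsymbol{G}$, $\boldsymbol{G}^L_{[k]}$ is the submatrix of the first $k$ rows and columns $L$; $\mathrm{mcm}$ is the maximum number of $1$-entries in distinct rows and columns (0 for no columns). UMCD algorithm: $N=$ all receivers, $k=0$; while $N\ne\emptyset$: $k\leftarrow k+1$; pick $w\in N$ minimizing $|A_w|$ (arbitrary tie-breaking); row $k$ of $\boldsymbol{G}$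 is the indicator of $\{w\}\cup A_w$; remove $w$ from $N$; remove every $i\in N$ with $\mathrm{mcm}(\boldsymbol{G}_{[k]}^{\{i\}\cup B_i})=\mathrm{mcm}(\boldsymbol{G}_{[k]}^{B_i})+1$; output $k$. $\beta_{\text{UMCD}}(M)$ is the output of (a fixed execution of) this algorithm on subinstance $M$. *)

(* Defs.v *)
From HB Require Import structures.
From mathcomp Require Import all_boot all_order all_algebra.
From mathcomp Require Import boolp classical_sets reals.
Set Implicit Arguments. Unset Strict Implicit. Unset Printing Implicit Defensive.
Import Order.TTheory GRing.Theory Num.Theory.

Section IndexCoding.
Variable m : nat.
Variable A : 'I_m -> {set 'I_m}.

Definition side_info (F : finFieldType) (t : nat)
  (x : {ffun 'I_m -> 'rV[F]_t}) (i : 'I_m) : {ffun 'I_m -> 'rV[F]_t} :=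
  [ffun j => if j \in A i then x j else 0%R].

Definition is_index_code (F : finFieldType) (t r : nat)
  (phi : {ffun 'I_m -> 'rV[F]_t} -> 'rV[F]_r) : Prop :=
  exists psi : 'I_m -> 'rV[F]_r -> {ffun 'I_m -> 'rV[F]_t} -> 'rV[F]_t,
    forall (x : {ffun 'I_m -> 'rV[F]_t}) (i : 'I_m),
      psi i (phi x) (side_info x i) = x i.

Definition code_rates (R : realType) : set R :=
  [set q | exists (F : finFieldType) (t r : nat)
             (phi : {ffun 'I_m -> 'rV[F]_t} -> 'rV[F]_r),
             [/\ (0 < t)%N, is_index_code phi & q = (r%:R / t%:R)%R]].

Definition beta (R : realType) : R := inf (@code_rates R).

(* A 0/1 matrix G with columns indexed by 'I_m is represented by the sequence
   of its rows, each row being the set of columns holding a 1. *)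

Definition matchable (rows : seq {set 'I_m}) (S : {set 'I_m}) : bool :=
  [exists f : {ffun 'I_m -> 'I_(size rows)},
     [forall c in S, forall c' in S, (f c == f c') ==> (c == c')]
     && [forall c in S, c \in nth finset.set0 rows (f c)]].

(* mcm(G^L): maximum number of 1-entries in distinct rows and columns of the
   submatrix with columns L (0 when L is empty) *)
Definition mcm (rows : seq {set 'I_m}) (L : {set 'I_m}) : nat :=
  \max_(S : {set 'I_m} | (S \subset L) && matchable rows S) #|S|.

Definition sideM (M : {set 'I_m}) (i : 'I_m) : {set 'I_m} := A i :&: M.
Definition Bset (M : {set 'I_m}) (i : 'I_m) : {set 'I_m} :=
  M :\: (sideM M i :|: [set i]).

Definition umcd_row (M : {set 'I_m}) (w : 'I_m) : {set 'I_m} :=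
  w |: sideM M w.

Definition umcd_next (M N : {set 'I_m}) (rows : seq {set 'I_m}) (w : 'I_m)
  : {set 'I_m} :=
  let rows' := rcons rows (umcd_row M w) in
  [set i in N :\ w |
     mcm rows' (i |: Bset M i) != (mcm rows' (Bset M i)).+1].

(* umcd_exec M N rows k : some execution of the while loop, started in state
   (N, G_[size rows] = rows), terminates with output k (arbitrary tie-breaking) *)
Inductive umcd_exec (M : {set 'I_m}) : {set 'I_m} -> seq {set 'I_m} -> nat -> Prop :=
| umcd_done rows : umcd_exec M finset.set0 rows (size rows)
| umcd_step (N : {set 'I_m}) (rows : seq {set 'I_m}) (w : 'I_m) (k : nat) :
    w \in N ->
    (forall v, v \in N -> #|sideM M w| <= #|sideM M v|)%N ->
    umcd_exec M (umcd_next M N rows w) (rcons rows (umcd_row M w)) k ->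
    umcd_exec M N rows k.

Definition umcd_output (M : {set 'I_m}) (k : nat) : Prop :=
  umcd_exec M M [::] k.

End IndexCoding.

(* Main.v *)
Require Import Defs.
From HB Require Import structures.
From mathcomp Require Import all_boot all_order all_algebra.
From mathcomp Require Import boolp classical_sets reals.
From mathcomp Require Import fingroup perm zify.
Import Order.TTheory GRing.Theory Num.Theory.
Set Implicit Arguments. Unset Strict Implicit. Unset Printing Implicit Defensive.
Local Notation fs0 := finset.set0.

Lemma bin_lt N (b : 'I_N -> bool) : (\sum_(y < N) b y * 2 ^ y < 2 ^ N)%N.
Proof.
elim: N b => [|N IH] b; first by rewrite big_ord0.
rewrite big_ord_recr /= expnS.
have := IH (fun y => b (widen_ord (leqnSn N) y)).
case: (b ord_max) => /=; lia.
Qed.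

Lemma bin_uniq N (b c : 'I_N -> bool) :
  (\sum_(y < N) b y * 2 ^ y = \sum_(y < N) c y * 2 ^ y)%N -> b =1 c.
Proof.
elim: N b c => [|N IH] b c; first by move=> _ [].
rewrite !big_ord_recr /=.
have Hb := bin_lt (fun y => b (widen_ord (leqnSn N) y)).
have Hc := bin_lt (fun y => c (widen_ord (leqnSn N) y)).
move=> E.
have Hm : b ord_max = c ord_max.
  move: Hb Hc E; set u := \sum_(_ < _) _; set v := \sum_(_ < _) _.
  case: (b ord_max); case: (c ord_max) => //=; rewrite ?mul1n ?mul0n; lia.
move: E; rewrite Hm => /addIn /IH eqw y.
case: (ltnP y N) => hy.
  have -> : y = widen_ord (leqnSn N) (Ordinal hy) by apply: val_inj.
  exact: eqw.
have -> : y = ord_max by apply: val_inj => /=; have := ltn_ord y; lia.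
exact: Hm.
Qed.
Lemma decode_idx (m l u l' u' : nat) : (u < m)%N -> (u' < m)%N ->
  (l * m + u = l' * m + u')%N -> l = l' /\ u = u'.
Proof.
move=> hu hu' E.
have h1 := congr1 (divn^~ m) E; have h2 := congr1 (modn^~ m) E.
move: h1 h2 => /=.
have m0 : (0 < m)%N by apply: leq_ltn_trans hu.
rewrite !divnMDl // !modnMDl !divn_small // !modn_small // !addn0 => -> ->.
by [].
Qed.

Lemma idx_lt (k m l u : nat) : (l < k)%N -> (u < m)%N -> (l * m + u < k * m)%N.
Proof.
move=> hl hu; apply: (@leq_trans (l.+1 * m)); first by rewrite mulSn [X in (_ < X)%N]addnC ltn_add2l.
by rewrite leq_mul2r hl orbT.
Qed.

Section Generic.
Variables (F : fieldType) (m k : nat) (rowsF : nat -> {set 'I_m}).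
Local Open Scope ring_scope.

Definition Gn (x : F) (l : nat) (u : 'I_m) : F :=
  if u \in rowsF l then x ^+ (2 ^ (l * m + u)) else 0.

Definition evalid (S : {set 'I_m}) (f : {ffun 'I_m -> 'I_k}) : bool :=
  [forall c in S, forall c' in S, (f c == f c') ==> (c == c')]
  && [forall c in S, c \in rowsF (f c)].

Definition subH (x : F) (S : {set 'I_m}) (f : {ffun 'I_m -> 'I_k}) : 'M[F]_#|S| :=
  \matrix_(a, b) Gn x (f (enum_val a)) (enum_val b).

Definition hexp (S : {set 'I_m}) (f : {ffun 'I_m -> 'I_k}) (s : 'S_(#|S|)) : nat :=
  (\sum_(a < #|S|) 2 ^ (f (enum_val a) * m + enum_val (s a)))%N.

Definition hsupp (S : {set 'I_m}) (f : {ffun 'I_m -> 'I_k}) (s : 'S_(#|S|)) : bool :=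
  [forall a, enum_val (s a) \in rowsF (f (enum_val a))].

Definition Ebound : nat := (m * 2 ^ (k * m)).+1.

Definition qpol (S : {set 'I_m}) (f : {ffun 'I_m -> 'I_k}) : {poly F} :=
  \poly_(n < Ebound) \sum_(s : 'S_(#|S|))
     ((-1) ^+ s * ((hsupp f s) && (hexp f s == n))%:R).

Lemma size_qpol (S : {set 'I_m}) (f : {ffun 'I_m -> 'I_k}) : (size (qpol S f) <= Ebound)%N.
Proof. exact: size_poly. Qed.

Lemma hexp_lt (S : {set 'I_m}) (f : {ffun 'I_m -> 'I_k}) (s : 'S_(#|S|)) : (hexp f s < Ebound)%N.
Proof.
rewrite /hexp /Ebound ltnS.
apply: (@leq_trans (\sum_(a < #|S|) 2 ^ (k * m))%N).
  apply: leq_sum => a _; rewrite leq_exp2l // ltnW //.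
  by apply: idx_lt.
rewrite sum_nat_const card_ord leq_mul2r; apply/orP; right; apply: (leq_trans (max_card _)); by rewrite card_ord.
Qed.

Lemma prod_if (I : finType) (P : I -> bool) (g : I -> nat) (x : F) :
  \prod_i (if P i then x ^+ g i else 0) =
  if [forall i, P i] then x ^+ (\sum_i g i)%N else 0.
Proof.
case: forallP => H.
  rewrite -prodrXr; apply: eq_bigr => i _; by rewrite H.
have [i Hi] : exists i, ~~ P i.
  by apply/existsP; rewrite -negb_forall; apply/forallP.
by rewrite (bigD1 i) //= (negbTE Hi) mul0r.
Qed.

Lemma det_subH x (S : {set 'I_m}) (f : {ffun 'I_m -> 'I_k}) : \det (subH x S f) = (qpol S f).[x].
Proof.
rewrite horner_poly /determinant.
under [RHS]eq_bigr do rewrite mulr_suml.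
rewrite exchange_big /=; apply: eq_bigr => s _.
have -> : \prod_i subH x S f i (s i) =
   \prod_i (if enum_val (s i) \in rowsF (f (enum_val i)) then
             x ^+ (2 ^ (f (enum_val i) * m + enum_val (s i)))%N else 0).
  by apply: eq_bigr => i _; rewrite mxE /Gn.
rewrite prod_if -/(hsupp f s) -/(hexp f s).
rewrite (bigD1 (Ordinal (hexp_lt f s))) //= big1 ?addr0; last first.
  move=> n /negbTE; rewrite -val_eqE /= eq_sym => ->.
  by rewrite andbF mulr0 mul0r.
by rewrite eqxx andbT; case: (hsupp f s); rewrite ?mulr1 ?mulr0 ?mul0r.
Qed.

Lemma hexp_uniq (S : {set 'I_m}) (f : {ffun 'I_m -> 'I_k}) (s : 'S_(#|S|)) : evalid S f -> hexp f s = hexp f (1%g : 'S_(#|S|)) -> s = 1%g.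
Proof.
case/andP => /forallP finj _ E.
have hm : forall a : 'I_#|S|, (f (enum_val a) * m + enum_val (s a) < k * m)%N.
  by move=> a; apply: idx_lt.
have hm1 : forall a : 'I_#|S|, (f (enum_val a) * m + enum_val a < k * m)%N.
  by move=> a; apply: idx_lt.
pose h1 a := Ordinal (hm1 a).
pose hs a := Ordinal (hm a).
have finj' : forall a a' : 'I_#|S|, (f (enum_val a) = f (enum_val a') :> nat) -> a = a'.
  move=> a a' e0; apply: enum_val_inj.
  have e : f (enum_val a) = f (enum_val a') by apply: val_inj.
  have := finj (enum_val a); rewrite enum_valP /= => /forallP/(_ (enum_val a')).
  by rewrite enum_valP e eqxx /= => /eqP.
have hsinj : injective hs.
  move=> a a' /(congr1 val) /= /decode_idx [] // e _; exact: finj'.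
have h1inj : injective h1.
  move=> a a' /(congr1 val) /= /decode_idx [] // e _; exact: finj'.
have conv : forall (h : 'I_#|S| -> 'I_(k * m)), injective h ->
   (\sum_(a < #|S|) 2 ^ h a = \sum_(y < k * m) (y \in [set h a | a in setT]) * 2 ^ y)%N.
  move=> h hinj.
  rewrite (_ : (\sum_(a < #|S|) 2 ^ h a)%N = \sum_(a in setT) 2 ^ h a)%N; last first.
    by apply: eq_bigl => a; rewrite in_setT.
  rewrite -(big_imset (fun y : 'I_(k * m) => 2 ^ y)%N); last first.
    by move=> ? ? _ _; apply: hinj.
  rewrite big_mkcond /=; apply: eq_bigr => y _.
  by case: (y \in _); rewrite ?mul1n ?mul0n.
have Ei : forall y, (y \in [set hs a | a in setT]) = (y \in [set h1 a | a in setT]).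
  apply: bin_uniq; rewrite -conv // -conv //.
  move: E; rewrite /hexp /=.
  by under [in RHS]eq_bigr do rewrite perm1.
apply/permP => a; rewrite perm1.
have : hs a \in [set h1 a | a in setT].
  by rewrite -Ei; apply/imsetP; exists a; rewrite ?in_setT.
case/imsetP => a' _ /(congr1 val) /= /decode_idx [] // /finj' <- e.
by apply: enum_val_inj; apply: val_inj.
Qed.

Lemma qpol_neq0 (S : {set 'I_m}) (f : {ffun 'I_m -> 'I_k}) : evalid S f -> qpol S f != 0.
Proof.
move=> hv.
have Hs1 : hsupp f (1%g : 'S_(#|S|)).
  case/andP: hv => _ /forallP h2; apply/forallP => a; rewrite perm1.
  by have := h2 (enum_val a); rewrite enum_valP.
have Hc : (qpol S f)`_(hexp f (1%g : 'S_(#|S|))) = 1.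
  rewrite coef_poly hexp_lt (bigD1 1%g) //= big1 ?addr0.
    by rewrite odd_perm1 expr0 mul1r Hs1 eqxx.
  move=> s hs; case: eqP => [/(hexp_uniq hv) es|_]; first by rewrite es eqxx in hs.
  by rewrite andbF mulr0.
apply/eqP => E; move: Hc; rewrite E coef0 => /eqP; by rewrite eq_sym oner_eq0.
Qed.
End Generic.

Definition Bnd (m k : nat) : nat :=
  (#|{: {set 'I_m} * {ffun 'I_m -> 'I_k}}| * Ebound m k + 3)%N.

Lemma exists_generic (F : finFieldType) (m k : nat) (rowsF : nat -> {set 'I_m}) :
  (Bnd m k < #|F|)%N -> exists x : F, x != 0%R /\
    forall (S : {set 'I_m}) (f : {ffun 'I_m -> 'I_k}), evalid rowsF S f -> (\det (subH rowsF x S f) != 0)%R.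
Proof.
move=> hF.
pose C := {: {set 'I_m} * {ffun 'I_m -> 'I_k}}%type.
pose P : {poly F} := ('X * \prod_(c : C) (if evalid rowsF c.1 c.2 then qpol F rowsF c.1 c.2 else 1))%R.
have nzf : forall c : C, (if evalid rowsF c.1 c.2 then qpol F rowsF c.1 c.2 else 1%R) != 0%R.
  by move=> c; case: ifP => [/qpol_neq0 //|_]; rewrite oner_eq0.
have nzP : P != 0%R by rewrite mulf_neq0 ?polyX_eq0 //; apply/prodf_neq0 => c _.
have szP : (size P <= Bnd m k)%N.
  rewrite /P; apply: (leq_trans (size_polyMleq _ _)); rewrite size_polyX.
  rewrite size_prod; last by move=> c _.
  rewrite /Bnd.
  have : (\sum_(c : C) size (if evalid rowsF c.1 c.2 then qpol F rowsF c.1 c.2 else 1%R) <= #|C| * Ebound m k)%N.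
    rewrite -sum_nat_const; apply: leq_sum => c _; case: ifP => _; first exact: size_qpol.
    by rewrite size_poly1 /Ebound.
  rewrite /C; move=> h; rewrite (_ : 2%R = 2%N) //. apply: (leq_trans (leq_pred _)). rewrite (addnC 2) (_ : 3 = 1 + 2)%N // addnA leq_add2r. apply: (leq_trans (leq_subr _ _)). rewrite addn1 ltnS; exact: h.
have [x hx] : exists x, ~~ root P x.
  apply/existsP; rewrite -negb_forall; apply/negP => /forallP hall.
  have hr : all (root P) (enum F) by apply/allP => y _; exact: hall.
  have := max_poly_roots nzP hr (enum_uniq F); rewrite -cardE => h.
  by move: (leq_trans (leq_trans h szP) (ltnW hF)); rewrite ltnn.
move: hx; rewrite /root /P hornerM hornerX horner_prod mulf_eq0 negb_or => /andP [x0 hp].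
exists x; split => // S f hv.
rewrite det_subH.
move/prodf_neq0: hp => /(_ (S, f) isT); by rewrite /= hv.
Qed.


Lemma matchableP (m : nat) (rows : seq {set 'I_m}) (S : {set 'I_m}) :
  reflect (exists f : {ffun 'I_m -> 'I_(size rows)}, {in S &, injective f} /\
             forall c, c \in S -> c \in nth fs0 rows (f c))
          (matchable rows S).
Proof.
apply: (iffP existsP) => [[f /andP [/forallP h1 /forallP h2]] | [f [h1 h2]]].
  exists f; split.
    move=> c c' hc hc' e; have := h1 c; rewrite hc /= => /forallP /(_ c').
    by rewrite hc' e eqxx /= => /eqP.
  by move=> c hc; have := h2 c; rewrite hc.
exists f; apply/andP; split; apply/forallP => c; apply/implyP => hc.
  apply/forallP => c'; apply/implyP => hc'; apply/implyP => /eqP e.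
  by rewrite (h1 c c' hc hc' e).
exact: h2.
Qed.

Lemma mcm_ge (m : nat) (rows : seq {set 'I_m}) (L S : {set 'I_m}) :
  S \subset L -> matchable rows S -> (#|S| <= mcm rows L)%N.
Proof. by move=> h1 h2; rewrite /mcm; apply: (@leq_bigmax_cond _ (fun S : {set 'I_m} => (S \subset L) && matchable rows S) (fun S => #|S|) S); rewrite h1. Qed.

Lemma mcm_witness (m : nat) (rows : seq {set 'I_m}) (L : {set 'I_m}) :
  (0 < mcm rows L)%N -> exists S : {set 'I_m}, [/\ S \subset L, matchable rows S & #|S| = mcm rows L].
Proof.
rewrite /mcm; case: (pickP (fun S : {set 'I_m} => (S \subset L) && matchable rows S)) => [S0 hS0 | none].
  rewrite (@bigop.bigmax_eq_arg _ S0 _ (fun S : {set 'I_m} => #|S|) hS0) => _.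
  case: arg_maxnP => //= S /andP [h1 h2] _; by exists S.
by rewrite big_pred0.
Qed.

Section RankArg.
Variables (F : fieldType) (m k : nat) (fin : seq {set 'I_m}).
Hypothesis hk : size fin = k.
Variable x : F.
Local Notation rowsF := (nth fs0 fin).
Hypothesis gen : forall (S : {set 'I_m}) (f : {ffun 'I_m -> 'I_k}),
  evalid rowsF S f -> (\det (subH rowsF x S f) != 0)%R.
Local Open Scope ring_scope.

Lemma rank_dec (i : 'I_m) (B : {set 'I_m}) (s : nat) (z : 'I_m -> F) :
  i \notin B -> (s <= k)%N ->
  mcm (take s fin) (i |: B) = (mcm (take s fin) B).+1 ->
  (forall l, (l < k)%N -> \sum_u Gn rowsF x l u * z u = 0) ->
  (forall u, u \notin i |: B -> z u = 0) -> z i = 0.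
Proof.
move=> iB sk hmcm eqz zout.
have [S' [hS'L hS'm hS'c]] : exists S' : {set 'I_m}, [/\ S' \subset i |: B, matchable (take s fin) S' & #|S'| = mcm (take s fin) (i |: B)].
  by apply: mcm_witness; rewrite hmcm.
case/matchableP: hS'm => f0 [f0inj f0mem].
have hsz : (size (take s fin) <= k)%N by rewrite size_takel ?hk.
pose f : {ffun 'I_m -> 'I_k} := [ffun c => widen_ord hsz (f0 c)].
have fnth : forall c, rowsF (f c) = nth fs0 (take s fin) (f0 c).
  move=> c; rewrite ffunE /= nth_take //.
  by apply: (leq_trans (ltn_ord (f0 c))); rewrite size_take; case: ifP => // /negbT; rewrite -leqNgt.
have hv : evalid rowsF S' f.
  apply/andP; split; apply/forallP => c; apply/implyP => hc.
    apply/forallP => c'; apply/implyP => hc'; apply/implyP => /eqP e.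
    apply/eqP; apply: f0inj => //; apply: val_inj; move: e => /(congr1 val).
    by rewrite !ffunE.
  by rewrite fnth; apply: f0mem.
have hdet := gen hv.
case: (eqVneq (z i) 0) => // zi; exfalso.
set p := #|S'| in hdet hS'c.
pose G := Gn rowsF x.
pose KB : 'M[F]_(p, m) := \matrix_(a, u) if u \in B then G (f (enum_val a)) u else 0.
pose T : 'M[F]_(m, p) := \matrix_(u, b) if enum_val b == i then (if u \in B then - z u / z i else 0) else (u == enum_val b)%:R.
have HKT : subH rowsF x S' f = KB *m T.
  apply/matrixP => a b; rewrite !mxE.
  set r := f (enum_val a).
  have eqr := eqz r (ltn_ord r).
  case: (eqVneq (enum_val b) i) => [ebi | ebni].
    under eq_bigr do rewrite !mxE ebi eqxx.
    rewrite ebi.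
    have -> : \sum_u (if u \in B then G r u else 0) * (if u \in B then - z u / z i else 0)
       = \sum_(u | u \in B) (G r u * (- z u / z i)).
      by rewrite [RHS]big_mkcond; apply: eq_bigr => u _; case: (u \in B); rewrite ?mul0r.
    have -> : \sum_(u | u \in B) (G r u * (- z u / z i)) = - (\sum_(u | u \in B) G r u * z u) / z i.
      rewrite mulNr mulr_suml -sumrN; apply: eq_bigr => u _; by rewrite mulrA mulrN mulNr.
    have -> : \sum_(u | u \in B) G r u * z u = - (G r i * z i).
      have hsplit : \sum_u G r u * z u = G r i * z i + \sum_(u | u \in B) G r u * z u.
        rewrite (bigD1 i) //=; congr (_ + _).
        rewrite big_mkcond [RHS]big_mkcond; apply: eq_bigr => u _.
        case: (eqVneq u i) => [-> | uni]; first by rewrite (negbTE iB).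
        case: ifP => // uB; rewrite zout ?mulr0 //.
        by rewrite in_setU1 negb_or uni uB.
      apply/eqP; rewrite -addr_eq0 addrC -hsplit; apply/eqP; exact: eqr.
    by rewrite opprK -mulrA mulfV // mulr1.
  have ebB : enum_val b \in B.
    have := fintype.subsetP hS'L _ (enum_valP b); rewrite in_setU1 => /orP [/eqP e|//].
    by rewrite e eqxx in ebni.
  rewrite (bigD1 (enum_val b)) //= big1 ?addr0.
    by rewrite !mxE ebB (negbTE ebni) eqxx mulr1.
  move=> u /negbTE une; rewrite !mxE (negbTE ebni) une mulr0 //.
have rkH : \rank (subH rowsF x S' f) = p.
  by apply: mxrank_unit; rewrite unitmxE unitfE.
have rkKB : \rank KB = p.
  apply/eqP; rewrite eqn_leq rank_leq_row /= -{1}rkH HKT; exact: mxrankM_maxl.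
have hfull : row_full KB^T by rewrite /row_full mxrank_tr rkKB.
pose phi := fullrankfun hfull.
have Qu := fullrowsub_unit hfull.
move: Qu; rewrite unitmxE unitfE /determinant => Qu.
have [sg hsg] : exists sg : 'S_p, \prod_a (rowsub phi KB^T) a (sg a) != 0.
  apply/existsP; apply: contraNT Qu; rewrite negb_exists => /forallP hall.
  apply/eqP; apply: big1 => sg _; have := hall sg; rewrite negbK => /eqP ->.
  by rewrite mulr0.
have hent : forall a, phi a \in B /\ phi a \in rowsF (f (enum_val (sg a))).
  move=> a; move/prodf_neq0: hsg => /(_ a isT); rewrite !mxE.
  case: (boolP (phi a \in B)) => pB; last by rewrite eqxx.
  rewrite /G /Gn; case: (boolP (phi a \in rowsF _)) => hr; last by rewrite eqxx.
  by [].
have phiinj : injective phi by apply: fullrankfun_inj.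
pose S2 := [set phi a | a in [set: 'I_p]].
have cS2 : #|S2| = p by rewrite card_imset // cardsT card_ord.
have S2B : S2 \subset B.
  by apply/fintype.subsetP => c /imsetP [a _ ->]; exact: (hent a).1.
have mS2 : matchable (take s fin) S2.
  apply/matchableP.
  pose g : {ffun 'I_m -> 'I_(size (take s fin))} :=
    [ffun u => if [pick a | phi a == u] is Some a then f0 (enum_val (sg a)) else f0 u].
  have gphi : forall a, g (phi a) = f0 (enum_val (sg a)).
    move=> a; rewrite ffunE; case: pickP => [a' /eqP /phiinj -> // | /(_ a)].
    by rewrite eqxx.
  exists g; split.
    move=> c c' /imsetP [a _ ->] /imsetP [a' _ ->]; rewrite !gphi => e.
    have := f0inj _ _ (enum_valP (sg a)) (enum_valP (sg a')) e.
    by move/enum_val_inj/perm_inj ->.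
  by move=> c /imsetP [a _ ->]; rewrite gphi -fnth; exact: (hent a).2.
have := mcm_ge S2B mS2; by rewrite cS2 hS'c hmcm ltnn.
Qed.
End RankArg.


Section Exec.
Variables (m : nat) (A : 'I_m -> {set 'I_m}).

Definition resolved (M : {set 'I_m}) (fin : seq {set 'I_m}) (i : 'I_m) : Prop :=
  exists s, (s <= size fin)%N /\
   (((s < size fin)%N /\ nth fs0 fin s = umcd_row A M i) \/
    mcm (take s fin) (i |: Bset A M i) = (mcm (take s fin) (Bset A M i)).+1).

Lemma exec_spec M N rows k : umcd_exec A M N rows k ->
  exists fin, [/\ size fin = k, take (size rows) fin = rows &
     forall i, i \in N -> resolved M fin i].
Proof.
elim=> {N rows k} [rows | N rows w k hw hmin hex [fin [hsz htk hres]]].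
  by exists rows; split => //; [rewrite take_size | move=> i; rewrite finset.in_set0].
have hsr : (size (rcons rows (umcd_row A M w)) <= size fin)%N.
  by rewrite -htk size_take; case: ifP => // /ltnW.
rewrite size_rcons in htk hsr.
exists fin; split => //.
  by rewrite -(take_takel _ (leqnSn _)) htk -cats1 take_size_cat.
move=> i hi; case: (eqVneq i w) => [-> | iw].
  exists (size rows); split; first exact: ltnW.
  left; split => //.
  by rewrite -(nth_take _ (ltnSn (size rows))) htk nth_rcons ltnn eqxx.
case hin: (i \in umcd_next A M N rows w); first exact: hres.
exists (size rows).+1; split => //; right.
move: hin; rewrite /umcd_next inE in_setD1 iw hi /= htk => /negbT.
by rewrite negbK => /eqP.
Qed.

Definition SD (F : fieldType) (M : {set 'I_m}) (k : nat) (G : nat -> 'I_m -> F) : Prop :=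
  forall i, i \in M -> forall z : 'I_m -> F,
    (forall l, (l < k)%N -> (\sum_u G l u * z u = 0)%R) ->
    (forall u, u \in A i -> z u = 0%R) ->
    (forall u, u \notin M -> z u = 0%R) -> z i = 0%R.

Lemma core (M : {set 'I_m}) (k : nat) : umcd_output A M k ->
  exists Bd, forall F : finFieldType, (Bd < #|F|)%N ->
    exists G : nat -> 'I_m -> F, SD M k G.
Proof.
move=> /exec_spec [fin [hsz _ hres]].
exists (Bnd m k) => F hF.
have [x [x0 gen]] := exists_generic (nth fs0 fin) hF.
exists (Gn (nth fs0 fin) x) => i hi z eqz zA zM.
have [s [hs [[hs' hrow] | hc]]] := hres i hi.
  have hsk : (s < k)%N by rewrite -hsz.
  have := eqz s hsk.
  rewrite (bigD1 i) //= big1 ?addr0.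
    rewrite /Gn hrow /umcd_row in_setU1 eqxx /= => /eqP.
    by rewrite mulf_eq0 expf_eq0 (negbTE x0) andbF /= => /eqP.
  move=> u ui; rewrite /Gn hrow /umcd_row in_setU1 (negbTE ui) /=.
  case: ifP => [/setIP [uA _] | _]; last by rewrite mul0r.
  by rewrite zA ?mulr0.
apply: (@rank_dec F m k fin hsz x gen i (Bset A M i) s z _ _ hc eqz).
- by rewrite /Bset !inE eqxx orbT.
- by rewrite -hsz.
move=> u; rewrite in_setU1 negb_or => /andP [ui uB].
case uM: (u \in M); last by apply: zM; rewrite uM.
apply: zA; move: uB; rewrite /Bset /sideM !inE uM (negbTE ui) andbT orbF.
by rewrite andbT negbK.
Qed.
End Exec.


Lemma sum_lt_ord N c : (c <= N)%N -> (\sum_(j < N) ((j < c)%N : nat))%N = c.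
Proof.
elim: N c => [|N IH] c; first by rewrite leqn0 big_ord0 => /eqP ->.
rewrite big_ord_recr /= leq_eqVlt => /orP [/eqP -> | hc].
  rewrite ltnSn addn1; congr _.+1; rewrite -[RHS](IH N) //.
  by apply: eq_bigr => j _ /=; rewrite ltn_ord (ltn_trans (ltn_ord j) (ltnSn N)).
by rewrite IH // ltnNge -ltnS hc addn0.
Qed.

Lemma wcount (I : finType) (P : pred I) (a w : I -> nat) N :
  (forall i, a i <= N)%N ->
  (\sum_(q : I * 'I_N | P q.1 && (q.2 < a q.1)%N) w q.1 = \sum_(i | P i) a i * w i)%N.
Proof.
move=> haN; rewrite big_mkcond /= -(pair_bigA _ (fun i (j : 'I_N) => if P i && (j < a i)%N then w i else 0%N)) /=.
rewrite [RHS]big_mkcond; apply: eq_bigr => i _.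
case: (P i) => /=; last by rewrite big1.
rewrite -[X in (_ = X * _)%N](sum_lt_ord (haN i)) big_distrl /=; apply: eq_bigr => j _.
by case: (j < a i)%N; rewrite ?mul1n ?mul0n.
Qed.

Section Codes.
Variables (m : nat) (A : 'I_m -> {set 'I_m}).

Lemma rate_in (R : realType) (F : finFieldType) (t : nat) (T : finType) (Ts : {set T})
  (Phi : {ffun 'I_m -> 'rV[F]_t} -> T -> F) :
  (0 < t)%N ->
  (forall x y i, (forall tau, tau \in Ts -> Phi x tau = Phi y tau) ->
      (forall j, j \in A i -> x j = y j) -> x i = y i) ->
  @code_rates _ A R (#|Ts|%:R / t%:R)%R.
Proof.
move=> t0 hsep.
pose phi (x : {ffun 'I_m -> 'rV[F]_t}) : 'rV[F]_#|Ts| := (\row_(b < #|Ts|) Phi x (enum_val b))%R.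
exists F, t, #|Ts|, phi; split => //.
pose psi (i : 'I_m) (c : 'rV[F]_#|Ts|) (s : {ffun 'I_m -> 'rV[F]_t}) : 'rV[F]_t :=
  match pselect (exists x, phi x = c /\ side_info A x i = s) with
  | left h => (proj1_sig (cid h)) i
  | right _ => 0%R
  end.
exists psi => x i; rewrite /psi.
case: pselect => [h | []]; last by exists x.
case: (cid h) => y [e1 e2] /=.
apply: hsep.
  move=> tau htau.
  have := congr1 (fun r : 'rV[F]_#|Ts| => r ord0 (enum_rank_in htau tau)) e1.
  by rewrite !mxE enum_rankK_in.
move=> j hj; have := congr1 (fun s : {ffun 'I_m -> 'rV[F]_t} => s j) e2.
by rewrite !ffunE hj.
Qed.

Lemma combine (R : realType) (F : finFieldType) (n : nat) (M : 'I_n -> {set 'I_m})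
  (k a : 'I_n -> nat) (G : 'I_n -> nat -> 'I_m -> F) (D : nat) :
  (forall j, SD A (M j) (k j) (G j)) ->
  (forall i, D.+1 <= \sum_(j | i \in M j) a j)%N ->
  @code_rates _ A R ((\sum_j a j * k j)%N%:R / D.+1%:R)%R.
Proof.
move=> hSD hcov.
pose t := D.+1.
pose Amax := (\sum_j a j).+1.
pose Kmax := (\sum_j k j).+1.
have haA : forall j, (a j <= Amax)%N.
  move=> j; apply: leqW; rewrite (bigD1 j) //=; exact: leq_addr.
have hkK : forall j, (k j < Kmax)%N.
  move=> j; rewrite ltnS (bigD1 j) //=; exact: leq_addr.
pose Copy := ('I_n * 'I_Amax)%type.
pose C (i : 'I_m) : {set Copy} := [set q : Copy | (i \in M q.1) && (q.2 < a q.1)%N].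
pose Ts : {set Copy * 'I_Kmax} := [set tau : Copy * 'I_Kmax | (tau.1.2 < a tau.1.1)%N && (tau.2 < k tau.1.1)%N].
have cC : forall i, #|C i| = (\sum_(j | i \in M j) a j)%N.
  move=> i; rewrite -sum1_card.
  rewrite (eq_bigl (fun q : Copy => (i \in M q.1) && (q.2 < a q.1)%N)); last by move=> q; rewrite inE.
  rewrite (@wcount _ (fun j => i \in M j) a (fun _ => 1%N) _ haA).
  by apply: eq_bigr => j _; rewrite muln1.
have cTs : #|Ts| = (\sum_j a j * k j)%N.
  rewrite -sum1_card.
  rewrite (eq_bigl (fun tau : Copy * 'I_Kmax => (fun q : Copy => (q.2 < a q.1)%N) tau.1 && (tau.2 < (fun q : Copy => k q.1) tau.1)%N)); last by move=> q; rewrite inE.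
  rewrite (@wcount _ (fun q : Copy => (q.2 < a q.1)%N) (fun q : Copy => k q.1) (fun _ => 1%N) Kmax); last by move=> q; apply: ltnW.
  under eq_bigr do rewrite muln1.
  rewrite (eq_bigl (fun q : Copy => true && (q.2 < a q.1)%N)) //.
  by rewrite (@wcount _ xpredT a k _ haA).
pose val (u : 'I_m) (q : Copy) (x : {ffun 'I_m -> 'rV[F]_t}) : F :=
  if (q \in C u) && (index q (enum (C u)) < t)%N
  then x u ord0 (inord (index q (enum (C u)))) else 0%R.
pose Phi (x : {ffun 'I_m -> 'rV[F]_t}) (tau : Copy * 'I_Kmax) : F :=
  (\sum_u G tau.1.1 tau.2 u * val u tau.1 x)%R.
rewrite -cTs; apply: (@rate_in R F t _ Ts Phi) => // x y i hPhi hA.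
apply/matrixP => r d; rewrite (ord1 r).
have hd : (d < #|C i|)%N by rewrite cC; apply: leq_trans (ltn_ord d) (hcov i).
pose q : Copy := enum_val (Ordinal hd).
have hqC : q \in C i by apply: enum_valP.
have hidx : index q (enum (C i)) = d.
  by rewrite /q /enum_val index_uniq ?enum_uniq //= -cardE.
move: (hqC); rewrite inE => /andP [hiM hqa].
have := hSD q.1 i hiM (fun u => val u q x - val u q y)%R.
have hvi : forall z : {ffun 'I_m -> 'rV[F]_t}, val i q z = z i ord0 d.
  by move=> z; rewrite /val hqC hidx ltn_ord /= inord_val.
rewrite !hvi => h; apply/eqP; rewrite -subr_eq0; apply/eqP; apply: h.
- move=> l hl.
  have hlK : (l < Kmax)%N by apply: leq_trans hl (ltnW (hkK _)).
  have := hPhi (q, Ordinal hlK); rewrite inE /= hqa hl => /(_ isT) e.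
  under eq_bigr do rewrite mulrBr.
  by rewrite sumrB /Phi /= in e *; rewrite e subrr.
- by move=> u hu; rewrite /val (hA u hu) subrr.
- by move=> u hu; rewrite /val inE (negbTE hu) /= subrr.
Qed.
End Codes.

Unset Implicit Arguments.

Theorem theorem7 (R : realType) (m : nat) (A : 'I_m -> {set 'I_m})
  (hA : forall i : 'I_m, i \notin A i)
  (n : nat) (M : 'I_n -> {set 'I_m}) (gamma : 'I_n -> R)
  (hgamma : forall j : 'I_n, (0 <= gamma j <= 1)%R)
  (hcover : forall i : 'I_m, (1 <= \sum_(j < n | i \in M j) gamma j)%R)
  (k : 'I_n -> nat)
  (hk : forall j : 'I_n, umcd_output A (M j) (k j)) :
  (beta A R <= \sum_(j < n) gamma j * (k j)%:R)%R.
Proof.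
have [Bd hBd] := choice (fun j => core (hk j)).
have [p hp pr] := prime_above (\sum_j Bd j).
pose F : finFieldType := 'F_p.
have hF : forall j, (Bd j < #|F|)%N.
  move=> j; rewrite card_Fp //; apply: leq_ltn_trans hp.
  by rewrite (bigD1 j) //= leq_addr.
have [G hG] := choice (fun j => hBd j F (hF j)).
Local Open Scope ring_scope.
pose target := \sum_(j < n) gamma j * (k j)%:R.
pose K := (\sum_j k j)%N.
have g0 : forall j, 0 <= gamma j by move=> j; case/andP: (hgamma j).
have rateD : forall D : nat, beta A R <= target + K%:R / D.+1%:R.
  move=> D.
  pose a j := (Num.truncn (gamma j * D.+1%:R)).+1.
  have ha1 : forall j, gamma j * D.+1%:R < (a j)%:R by move=> j; exact: truncnS_gt.
  have ha2 : forall j, (a j)%:R <= gamma j * D.+1%:R + 1.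
    move=> j; rewrite /a -natr1 lerD2r truncn_le mulr_ge0 //.
  have hcov : forall i, (D.+1 <= \sum_(j | i \in M j) a j)%N.
    move=> i; rewrite -(ler_nat R) natr_sum.
    apply: (le_trans _ (ler_sum _ (fun j _ => ltW (ha1 j)))).
    rewrite -mulr_suml -[X in X <= _]mul1r ler_wpM2r //.
  have inr := @combine m A R F n M k a G D hG hcov.
  have lb : has_lbound (@code_rates _ A R).
    exists 0 => q [F' [t [r [phi [t0 _ ->]]]]]; exact: divr_ge0.
  have hb : beta A R <= (\sum_j a j * k j)%N%:R / D.+1%:R := ge_inf lb inr.
  apply: (le_trans hb).
  rewrite ler_pdivrMr ?ltr0Sn // mulrDl divfK ?pnatr_eq0 //.
  rewrite natr_sum /target mulr_suml /K natr_sum -big_split /=.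
  apply: ler_sum => j _; rewrite natrM.
  apply: le_trans (ler_wpM2r (ler0n _ _) (ha2 j)) _.
  by rewrite mulrDl mul1r mulrAC.
apply/ler_addgt0Pr => e e0.
pose D := Num.truncn (K%:R / e).
apply: (le_trans (rateD D)); rewrite lerD2l ler_pdivrMr ?ltr0Sn //.
have := truncnS_gt (K%:R / e); rewrite -/D ltr_pdivrMr // => /ltW.
by rewrite mulrC.
Qed.
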